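(* Let $G$ be a finite non-abelian group such that the non-centralizer graph $\Upsilon_G$ is $n$-regular. Then $n$ is even, $|G|\equiv 0\pmod 8$, and $n+2\leq |G|\leq 4n/3$.
   Context: For a finite group $G$, $C_G(x)$ denotes the centralizer of $x\in G$. The non-centralizer graph $\Upsilon_G$ is the simple graph with vertex set $G$ in which two distinct vertices $x,y$ are adjacent if and only if $C_G(x)\neq C_G(y)$. A graph is $n$-regular if every vertex has degree exactly $n$. *)

(* Defs.v *)
From mathcomp Require Import all_boot all_fingroup.
Set Implicit Arguments. Unset Strict Implicit. Unset Printing Implicit Defensive.
Local Open Scope group_scope.

Definition noncent_adj (gT : finGroupType) (G : {group gT}) (x y : gT) : bool :=
  (x != y) && ('C_G[x] != 'C_G[y]).

Definition noncent_deg (gT : finGroupType) (G : {group gT}) (x : gT) : nat :=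
  #|[set y in G | noncent_adj G x y]|.

Definition noncent_regular (gT : finGroupType) (G : {group gT}) (n : nat) : Prop :=
  forall x, x \in G -> noncent_deg G x = n.

(* Main.v *)
Require Import Defs.
From mathcomp Require Import all_boot all_fingroup cyclic pgroup center commutator abelian.
Set Implicit Arguments. Unset Strict Implicit. Unset Printing Implicit Defensive.

Section S.
Local Open Scope group_scope.
Variables (gT : finGroupType) (G : {group gT}).

Definition Sx (x : gT) := [set y in G | 'C_G[y] == 'C_G[x]].

Lemma deg_eq x : noncent_deg G x = (#|G| - #|Sx x|)%N.
Proof.
rewrite /noncent_deg.
have -> : [set y in G | noncent_adj G x y] = G :\: Sx x.
  apply/setP=> y; rewrite !inE /noncent_adj.
  case: (y \in G) => //=.
  have [->|_] := eqVneq x y; first by rewrite eqxx.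
  by rewrite andbT eq_sym.
rewrite cardsD; congr (_ - _)%N; congr #|_|.
rewrite (setIidPr _) //; apply/subsetP=> y; rewrite inE => /andP[] //.
Qed.

Lemma cent_mulZ x z : z \in 'Z(G) -> 'C_G[x * z] = 'C_G[x].
Proof.
case/centerP=> Gz cz; apply/setP=> g; apply/subcent1P/subcent1P => -[Gg c]; split=> //.
  apply: (mulIg z); by rewrite -mulgA -(cz g Gg) mulgA c mulgA.
by rewrite /commute -mulgA (cz g Gg) mulgA c mulgA.
Qed.

Lemma cent_inv x : 'C_G[x^-1] = 'C_G[x].
Proof.
apply/setP=> g; apply/subcent1P/subcent1P => -[Gg c]; split=> //.
  by rewrite -(invgK x); apply/commute_sym/commuteV/commute_sym.
exact/commute_sym/commuteV/commute_sym.
Qed.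

Lemma cent_G y : y \in G -> ('C_G[y] == G) = (y \in 'Z(G)).
Proof.
move=> Gy; apply/eqP/centerP => [e|[_ c]].
  split=> // g Gg; rewrite -e in Gg; by case/subcent1P: Gg => _ /commute_sym.
apply/setP=> g; apply/subcent1P/idP => [[]//|Gg]; split=> //; exact: (c g Gg).
Qed.

End S.

From mathcomp Require Import zify.

Theorem theorem2p12 (gT : finGroupType) (G : {group gT}) (n : nat) :
  ~~ abelian G -> noncent_regular G n ->
  [/\ ~~ odd n, 8 %| #|G| & n + 2 <= #|G| /\ 3 * #|G| <= 4 * n].
Proof.
move=> nab reg.
Local Open Scope group_scope.
set Z := 'Z(G).
have sZG : Z \subset G := center_sub G.
have nZG : G \subset 'N(Z) by case/andP: (center_normal G).
have S1 : Sx G 1 = Z.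
  apply/setP=> y; rewrite inE cent11T setIT.
  case Gy: (y \in G); last by apply/esym/negbTE; apply: contraFN Gy => /(subsetP sZG).
  by rewrite /= cent_G.
have n_eq : n = (#|G| - #|Z|)%N by rewrite -(reg 1 (group1 G)) deg_eq S1.
have cZ : (#|Z| <= #|G|)%N := subset_leq_card sZG.
have cardS x : x \in G -> #|Sx G x| = #|Z|.
  move=> Gx; have := reg x Gx; rewrite deg_eq => e.
  have : (#|Sx G x| <= #|G|)%N.
    by apply: subset_leq_card; apply/subsetP=> y; rewrite inE => /andP[].
  lia.
have sq x : x \in G -> x ^+ 2 \in Z.
  move=> Gx.
  have sZS : x *: Z \subset Sx G x.
    apply/subsetP=> y /lcosetP[z Zz ->]; rewrite inE groupM //=; last exact: (subsetP sZG).
    by rewrite cent_mulZ.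
  have eqS : x *: Z = Sx G x.
    apply/eqP; rewrite eqEcard sZS card_lcoset cardS // leqnn //.
  have : x^-1 \in Sx G x by rewrite inE groupV Gx cent_inv eqxx.
  rewrite -eqS mem_lcoset => /groupVr.
  by rewrite invMg invgK expgS expg1.
have ex2 : exponent (G / Z) %| 2.
  apply/exponentP=> xb /morphimP[x Nx Gx ->].
  by rewrite -morphX // /= coset_id // sq.
have ab2 := exponent2_abelem ex2.
have [k hk] := p_natP (abelem_pgroup ab2).
have ncyc : ~~ cyclic (G / Z).
  by apply: contra nab => /cyclic_center_factor_abelian.
have k2 : (2 <= k)%N.
  case: k hk => [|[|k]] hk //.
  - case/negP: ncyc; move/eqP: hk; rewrite -trivg_card1 => /eqP ->; exact: cyclic1.
  - by case/negP: ncyc; apply: prime_cyclic; rewrite hk.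
have hG : #|G| = (#|Z| * 2 ^ k)%N.
  by rewrite -hk card_quotient // Lagrange.
have [x Gx nx] : exists2 x, x \in G & x \notin 'C(G) by apply/subsetPn.
have : ~~ [forall y in G, [~ x, y] == 1].
  apply: contra nx => /forall_inP H; apply/centP => y Gy; apply/commgP; exact: H.
case/forall_inPn => y Gy ncy.
have dZ : [~ x, y] \in Z.
  have := der1_min nZG (abelem_abelian ab2).
  move/subsetP; apply; rewrite derg1; exact: mem_commg.
have d2 : [~ x, y] ^+ 2 = 1.
  rewrite -commgX.
    apply/eqP/commgP; case/centerP: (sq y Gy) => _ c; exact/commute_sym/c.
  case/centerP: dZ => _ c; exact/commute_sym/c.
have Zev : 2 %| #|Z|.
  have o2 : #[[~ x, y]] = 2.
    have h1 : #[[~ x, y]] %| 2 by rewrite order_dvdn d2.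
    have h2 : #[[~ x, y]] != 1%N by rewrite order_eq1.
    have := dvdn_leq (isT : (0 < 2)%N) h1; have := order_gt0 [~ x, y]; lia.
  by rewrite -o2 order_dvdG.
case/dvdnP: Zev => t ht.
have [k' kk] : exists k', k = k'.+2 by exists k.-2; lia.
rewrite kk in hG.
have b0 : (0 < 2 ^ k')%N := expn_gt0 _ _.
move: hG; rewrite ht expnS expnS => hG.
have t0 : (0 < t)%N.
  have : (0 < #|Z|)%N by rewrite cardG_gt0.
  rewrite ht; lia.
set m := (t * 2 ^ k')%N.
have mt : (t <= m)%N by rewrite /m leq_pmulr.
have hG' : #|G| = (8 * m)%N by rewrite hG /m; lia.
subst n; rewrite hG' ht.
split.
- have -> : (8 * m - t * 2 = (4 * m - t) * 2)%N by lia.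
  by rewrite oddM andbF.
- exact: dvdn_mulr.
- split; lia.
Qed.
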